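(* Let $(\mathbf{x}^1,y_l^1,y_r^1),\dots,(\mathbf{x}^T,y_l^T,y_r^T)$ be a sequence of examples with $\mathbf{x}^t\in\mathbb{R}^d$ and integers $1\le y_l^t\le y_r^t\le K$, and run the PA-II algorithm with parameter $C>0$ starting from $\mathbf{w}^1=\mathbf{0}$, $\boldsymbol\theta^1=\mathbf{0}$. Let $c=\min_{t\in[T]}(y_r^t-y_l^t)$, $R^2=\max_{t\in[T]}\Vert\mathbf{x}^t\Vert^2$, $D=1+\frac{1}{2C}+R^2(K-c-1)$, and let $\mathbf{v}=(\mathbf{u},\mathbf{b})$, $\mathbf{u}\in\mathbb{R}^d$, $\mathbf{b}\in\mathbb{R}^{K-1}$, be the parameters of an arbitrary predictor, $\Vert\mathbf{v}\Vert^2=\Vert\mathbf{u}\Vert^2+\Vert\mathbf{b}\Vert^2$. Then $$\sum_{t=1}^T\sum_{i=1}^{K-1}(l_i^t)^2\le D\left(\Vert\mathbf{v}\Vert^2+2C\sum_{t=1}^T\sum_{i=1}^{K-1}(l_i^{t*})^2\right).$$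
   Context: PA-II algorithm with parameter $C>0$: at trial $t$, with $I_t=\{1,\dots,y_l^t-1\}\cup\{y_r^t,\dots,K-1\}$, $(\mathbf{w}^{t+1},\boldsymbol\theta^{t+1})$ is the $(\mathbf{w},\boldsymbol\theta)$-part of the minimizer over $\mathbf{w},\boldsymbol\theta,(\xi_i)_{i\in I_t}$ of $\tfrac12\Vert\mathbf{w}-\mathbf{w}^t\Vert^2+\tfrac12\Vert\boldsymbol\theta-\boldsymbol\theta^t\Vert^2+C\sum_{i\in I_t}\xi_i^2$ subject to $\mathbf{w}\cdot\mathbf{x}^t-\theta_i\ge1-\xi_i$ ($i\le y_l^t-1$) and $\mathbf{w}\cdot\mathbf{x}^t-\theta_i\le-1+\xi_i$ ($i\ge y_r^t$). Losses of the algorithm: $l_i^t=\max(0,1+\theta_i^t-\mathbf{w}^t\cdot\mathbf{x}^t)$ for $1\le i\le y_l^t-1$, $l_i^t=\max(0,1+\mathbf{w}^t\cdot\mathbf{x}^t-\theta_i^t)$ for $y_r^t\le i\le K-1$, $l_i^t=0$ otherwise. Losses of the fixed predictor: $l_i^{t*}=\max(0,1-\mathbf{u}\cdot\mathbf{x}^t+b_i)$ for $1\le i\le y_l^t-1$, $l_i^{t*}=\max(0,1+\mathbf{u}\cdot\mathbf{x}^t-b_i)$ for $y_r^t\le i\le K-1$, $0$ otherwise. *)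

(* Defs.v *)
From HB Require Import structures.
From mathcomp Require Import all_boot all_order all_algebra.
Set Implicit Arguments. Unset Strict Implicit. Unset Printing Implicit Defensive.
Import Order.TTheory GRing.Theory Num.Theory.
Local Open Scope ring_scope.

Section PA2.
Variable R : realFieldType.

Definition dotv (n : nat) (a b : 'rV[R]_n) : R := \sum_(i < n) a 0 i * b 0 i.
Definition sqn (n : nat) (a : 'rV[R]_n) : R := dotv a a.

(* Thresholds live in 'rV_(K.-1); the ordinal j : 'I_(K.-1) stands for the
   paper's threshold index i = j+1 (so 1 <= i <= K-1).
   i \in I_t  <->  i <= yl-1  or  i >= yr. *)
Definition inI (K : nat) (yl yr : nat) (j : 'I_K.-1) : bool :=
  (j.+1 < yl)%N || (yr <= j.+1)%N.

Definition pa2_feasible (d K : nat) (x : 'rV[R]_d) (yl yr : nat)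
    (w : 'rV[R]_d) (th : 'rV[R]_K.-1) (xi : 'I_K.-1 -> R) : Prop :=
  forall j : 'I_K.-1,
    ((j.+1 <= yl - 1)%N -> 1 - xi j <= dotv w x - th 0 j) /\
    ((yr <= j.+1)%N -> dotv w x - th 0 j <= -1 + xi j).

Definition pa2_obj (d K : nat) (C : R) (yl yr : nat)
    (w0 : 'rV[R]_d) (th0 : 'rV[R]_K.-1)
    (w : 'rV[R]_d) (th : 'rV[R]_K.-1) (xi : 'I_K.-1 -> R) : R :=
  sqn (w - w0) / 2 + sqn (th - th0) / 2
  + C * \sum_(j < K.-1 | inI yl yr j) xi j ^+ 2.

Definition pa2_step (d K : nat) (C : R) (x : 'rV[R]_d) (yl yr : nat)
    (w0 : 'rV[R]_d) (th0 : 'rV[R]_K.-1) (w1 : 'rV[R]_d) (th1 : 'rV[R]_K.-1)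
    : Prop :=
  exists xi : 'I_K.-1 -> R,
    pa2_feasible x yl yr w1 th1 xi /\
    forall (w : 'rV[R]_d) (th : 'rV[R]_K.-1) (xi' : 'I_K.-1 -> R),
      pa2_feasible x yl yr w th xi' ->
      pa2_obj C yl yr w0 th0 w1 th1 xi <= pa2_obj C yl yr w0 th0 w th xi'.

Definition pa_loss (d K : nat) (w : 'rV[R]_d) (th : 'rV[R]_K.-1)
    (x : 'rV[R]_d) (yl yr : nat) (j : 'I_K.-1) : R :=
  if (j.+1 <= yl - 1)%N then Num.max 0 (1 + th 0 j - dotv w x)
  else if (yr <= j.+1)%N then Num.max 0 (1 + dotv w x - th 0 j)
  else 0.

End PA2.

(* Main.v *)
Require Import Defs.
From HB Require Import structures.
From mathcomp Require Import all_boot all_order all_algebra.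
From mathcomp Require Import ring lra zify.
Import Order.TTheory GRing.Theory Num.Theory.
Local Open Scope ring_scope.

Lemma sqnE (R : realFieldType) n (v : 'rV[R]_n) : sqn v = \sum_(i < n) (v 0 i)^+2.
Proof. by rewrite /sqn /dotv; apply: eq_bigr => i _; rewrite expr2. Qed.

Lemma sqn_ge0 (R : realFieldType) n (v : 'rV[R]_n) : 0 <= sqn v.
Proof. by rewrite sqnE; apply: sumr_ge0 => i _; rewrite sqr_ge0. Qed.

Lemma sqexp (R : realFieldType) (I : finType) (P : pred I) (a e : I -> R) (l : R) :
  \sum_(i | P i) (a i + l * e i)^+2 =
  \sum_(i | P i) a i ^+2 + 2 * l * \sum_(i | P i) a i * e i + l^+ 2 * \sum_(i | P i) e i ^+ 2.
Proof.
rewrite !mulr_sumr -!big_split /=; apply: eq_bigr => i _; ring.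
Qed.

Lemma dotvDZ (R : realFieldType) n (a e x : 'rV[R]_n) (l : R) :
  dotv (a + l *: e) x = dotv a x + l * dotv e x.
Proof.
rewrite /dotv mulr_sumr -big_split /=; apply: eq_bigr => i _; rewrite !mxE; ring.
Qed.

Lemma dotvB (R : realFieldType) n (a e x : 'rV[R]_n) :
  dotv (a - e) x = dotv a x - dotv e x.
Proof.
rewrite /dotv -sumrB; apply: eq_bigr => i _; rewrite !mxE; ring.
Qed.

Lemma quad_disc (R : realFieldType) (S G E : R) :
  0 <= S -> 0 <= E -> (forall l, 0 <= S + 2 * l * G + l^+ 2 * E) -> G^+2 <= S * E.
Proof.
move=> S0 E0 H.
have [E0'|Ep] := eqVneq E 0.
  have [G0|Gn] := eqVneq G 0; first by rewrite G0 E0'; nra.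
  have := H (- (S + 1) / (2 * G)); rewrite E0' => H'.
  exfalso; move: H'; rewrite mulr0 addr0.
  have -> : 2 * (- (S + 1) / (2 * G)) * G = - (S + 1) by field; rewrite Gn.
  lra.
have Epos : 0 < E by rewrite lt_def Ep E0.
have := H (- G / E).
have -> : S + 2 * (- G / E) * G + (- G / E) ^+ 2 * E = S - G^+2 / E by field.
move=> h; have : G^+2 / E <= S by lra.
by rewrite ler_pdivrMr.
Qed.

Lemma cauchy (R : realFieldType) n (a x : 'rV[R]_n) : dotv a x ^+ 2 <= sqn a * sqn x.
Proof.
rewrite mulrC; apply: quad_disc; rewrite ?sqn_ge0 // => l.
rewrite !sqnE /dotv.
have := @sqexp _ _ predT (fun i => x 0 i) (fun i => a 0 i) l.
have -> : \sum_(i < n) a 0 i * x 0 i = \sum_(i < n) x 0 i * a 0 i.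
  by apply: eq_bigr => i _; rewrite mulrC.
move=> <-; apply: sumr_ge0 => i _; exact: sqr_ge0.
Qed.

Lemma quad_pos (R : realFieldType) (g h : R) :
  0 <= h -> (forall l, 0 < l -> l <= 1 -> 0 <= l * g + l^+ 2 * h) -> 0 <= g.
Proof.
move=> h0 H; rewrite leNgt; apply/negP => gn.
have [h0'|hp] := eqVneq h 0.
  have := H 1 ltr01 (lexx _); rewrite h0'; lra.
have hpos : 0 < h by rewrite lt_def hp h0.
pose l := Num.min 1 (- g / (2 * h)).
have l0 : 0 < l by rewrite /l lt_min ltr01 /= divr_gt0 ?mulr_gt0 // oppr_gt0.
have l1 : l <= 1 by rewrite /l ge_min lexx.
have l2 : l * (2 * h) <= - g by rewrite -ler_pdivlMr ?mulr_gt0 // /l ge_min lexx orbT.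
have := H l l0 l1; nra.
Qed.

Lemma step_bound (R : realFieldType) d K (C : R) (x : 'rV[R]_d) yl yr
  (w0 w1 u : 'rV[R]_d) (th0 th1 b : 'rV[R]_K.-1) (xs : 'I_K.-1 -> R) :
  0 < C -> pa2_step C x yl yr w0 th0 w1 th1 -> pa2_feasible x yl yr u b xs ->
  exists xi, pa2_feasible x yl yr w1 th1 xi /\
  sqn (w1 - w0) + sqn (th1 - th0) + 2 * C * \sum_(j < K.-1 | inI yl yr j) xi j ^+ 2
  + (sqn (u - w1) + sqn (b - th1))
  <= sqn (u - w0) + sqn (b - th0) + 2 * C * \sum_(j < K.-1 | inI yl yr j) xs j ^+ 2.
Proof.
move=> C0 [xi [Fxi Hmin]] Fs; exists xi; split => //.
pose wl l := w1 + l *: (u - w1).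
pose thl l := th1 + l *: (b - th1).
pose xil l j := xi j + l * (xs j - xi j).
have Fl : forall l, 0 <= l -> l <= 1 -> pa2_feasible x yl yr (wl l) (thl l) (xil l).
  move=> l l0 l1; rewrite /pa2_feasible => j; have [A1 A2] := Fxi j; have [B1 B2] := Fs j.
  rewrite /wl /thl /xil dotvDZ dotvB !mxE.
  split => h; [have := A1 h; have := B1 h | have := A2 h; have := B2 h]; nra.
pose A1 := \sum_(i < d) ((w1 - w0) 0 i)^+2.
pose G1 := \sum_(i < d) (w1 - w0) 0 i * (u - w1) 0 i.
pose E1 := \sum_(i < d) ((u - w1) 0 i)^+2.
pose A2 := \sum_(i < K.-1) ((th1 - th0) 0 i)^+2.
pose G2 := \sum_(i < K.-1) (th1 - th0) 0 i * (b - th1) 0 i.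
pose E2 := \sum_(i < K.-1) ((b - th1) 0 i)^+2.
pose A3 := \sum_(j < K.-1 | inI yl yr j) xi j ^+2.
pose G3 := \sum_(j < K.-1 | inI yl yr j) xi j * (xs j - xi j).
pose E3 := \sum_(j < K.-1 | inI yl yr j) (xs j - xi j) ^+2.
have ew : forall l, sqn (wl l - w0) = A1 + 2 * l * G1 + l^+ 2 * E1.
  move=> l; rewrite sqnE -(@sqexp _ _ predT); apply: eq_bigr => i _.
  by rewrite /wl !mxE; congr (_ ^+ 2); ring.
have et : forall l, sqn (thl l - th0) = A2 + 2 * l * G2 + l^+ 2 * E2.
  move=> l; rewrite sqnE -(@sqexp _ _ predT); apply: eq_bigr => i _.
  by rewrite /thl !mxE; congr (_ ^+ 2); ring.
have ex : forall l, \sum_(j < K.-1 | inI yl yr j) xil l j ^+ 2 = A3 + 2 * l * G3 + l^+ 2 * E3.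
  by move=> l; rewrite -sqexp.
have ew0 : sqn (w1 - w0) = A1.
  rewrite sqnE; apply: eq_bigr => i _ //.
have et0 : sqn (th1 - th0) = A2.
  rewrite sqnE; apply: eq_bigr => i _ //.
have ew1 : sqn (u - w0) = A1 + 2 * 1 * G1 + 1^+ 2 * E1.
  rewrite -(ew 1) /wl; congr sqn; apply/matrixP => i j; rewrite !mxE; ring.
have et1 : sqn (b - th0) = A2 + 2 * 1 * G2 + 1^+ 2 * E2.
  rewrite -(et 1) /thl; congr sqn; apply/matrixP => i j; rewrite !mxE; ring.
have ex1 : \sum_(j < K.-1 | inI yl yr j) xs j ^+ 2 = A3 + 2 * 1 * G3 + 1^+ 2 * E3.
  rewrite -(ex 1); apply: eq_bigr => j _; rewrite /xil; congr (_ ^+ 2); ring.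
have E1p : 0 <= E1 by apply: sumr_ge0 => i _; apply: sqr_ge0.
have E2p : 0 <= E2 by apply: sumr_ge0 => i _; apply: sqr_ge0.
have E3p : 0 <= E3 by apply: sumr_ge0 => i _; apply: sqr_ge0.
have E1e : sqn (u - w1) = E1 by rewrite sqnE.
have E2e : sqn (b - th1) = E2 by rewrite sqnE.
have gp : 0 <= G1 + G2 + 2 * C * G3.
  apply: (@quad_pos _ _ (E1 / 2 + E2 / 2 + C * E3)).
    have : 0 <= C * E3 by apply: mulr_ge0 => //; apply: ltW.
    lra.
  move=> l l0 l1; have := Hmin _ _ _ (Fl l (ltW l0) l1).
  rewrite /pa2_obj ew et ex ew0 et0.
  move=> h; have : 0 <= l * (G1 + G2 + 2 * C * G3) + l ^+ 2 * (E1 / 2 + E2 / 2 + C * E3).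
    set S := (X in _ <= X).
    have -> : S = (A1 + 2 * l * G1 + l ^+ 2 * E1) / 2 + (A2 + 2 * l * G2 + l ^+ 2 * E2) / 2 +
         C * (A3 + 2 * l * G3 + l ^+ 2 * E3) - (A1 / 2 + A2 / 2 + C * A3).
      rewrite /S. clearbody A1 A2 A3 G1 G2 G3 E1 E2 E3. by field.
    by rewrite subr_ge0.
  by [].
rewrite ew0 et0 ew1 et1 ex1 E1e E2e -/A3.
have : 0 <= C * E3 by apply: mulr_ge0 => //; apply: ltW.
lra.
Qed.

Lemma amgm2 (R : realFieldType) (s t u v : R) :
  0 <= s -> 0 <= t -> 0 <= u -> 0 <= v -> s ^+ 2 <= u * v -> t ^+ 2 <= u * v ->
  True.
Proof. by []. Qed.

Lemma cross (R : realFieldType) (a b P Q : R) :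
  0 <= a -> 0 <= b -> 0 <= P -> 0 <= Q -> (a * b) ^+ 2 <= P * Q -> 2 * (a * b) <= P + Q.
Proof.
move=> a0 b0 P0 Q0 h.
have h2 : (2 * (a * b)) ^+ 2 <= (P + Q) ^+ 2.
  have := sqr_ge0 (P - Q); move: h; rewrite !exprMn; nra.
have : 0 <= P + Q by lra.
move=> pq; rewrite -(@ler_pXn2r _ 2) // nnegrE //.
by rewrite mulr_ge0 // mulr_ge0.
Qed.

Lemma per_term (R : realFieldType) (a b c al ga p : R) :
  0 <= a -> 0 <= b -> 0 <= c -> 0 <= al -> 0 < ga -> 0 <= p -> a ^+ 2 <= al * p ->
  (a + b + c) ^+ 2 <= (al + 1 + ga) * (p + b ^+ 2 + c ^+ 2 / ga).
Proof.
move=> a0 b0 c0 al0 ga0 p0 h.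
set r := c ^+ 2 / ga.
have r0 : 0 <= r by rewrite /r divr_ge0 // ?sqr_ge0 // ltW.
have cr : c ^+ 2 = ga * r by rewrite /r mulrC divfK // gt_eqF.
have ga0' := ltW ga0.
have b2 := sqr_ge0 b.
have hab : 2 * (a * b) <= al * b ^+ 2 + p.
  apply: cross => //; first exact: mulr_ge0.
  rewrite exprMn; nra.
have hac : 2 * (a * c) <= al * r + ga * p.
  apply: cross => //; try exact: mulr_ge0.
  rewrite exprMn cr; nra.
have hbc : 2 * (b * c) <= ga * b ^+ 2 + r.
  apply: cross => //; first exact: mulr_ge0.
  rewrite exprMn cr; nra.
have -> : (a + b + c) ^+ 2 = a ^+ 2 + b ^+ 2 + c ^+ 2 + 2 * (a * b) + 2 * (a * c) + 2 * (b * c) by ring.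
rewrite cr; nra.
Qed.

Lemma normK2 (R : realFieldType) (x : R) : `|x| ^+ 2 = x ^+ 2.
Proof. exact: real_normK (num_real _). Qed.

Lemma loss_bound (R : realFieldType) d K (C : R) (x : 'rV[R]_d) yl yr
  (w0 w1 : 'rV[R]_d) (th0 th1 : 'rV[R]_K.-1) (xi : 'I_K.-1 -> R) :
  0 < C -> (yl <= yr)%N -> pa2_feasible x yl yr w1 th1 xi ->
  \sum_(j < K.-1) pa_loss w0 th0 x yl yr j ^+ 2 <=
  (1 + 1 / (2 * C) + sqn x * \sum_(j < K.-1 | inI yl yr j) (1:R)) *
  (sqn (w1 - w0) + sqn (th1 - th0) + 2 * C * \sum_(j < K.-1 | inI yl yr j) xi j ^+ 2).
Proof.
move=> C0 ylr F.
set m := \sum_(j < K.-1 | inI yl yr j) (1:R).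
set a := `|dotv (w1 - w0) x|.
set al := m * sqn x.
set ga := 1 / (2 * C).
set p := sqn (w1 - w0) / m.
have ga0 : 0 < ga by rewrite /ga divr_gt0 // mulr_gt0.
have m0 : 0 <= m by apply: sumr_ge0 => j _; exact: ler01.
have al0 : 0 <= al by rewrite /al mulr_ge0 // sqn_ge0.
have p0 : 0 <= p by rewrite /p divr_ge0 // sqn_ge0.
rewrite (bigID (inI yl yr)) /= [X in _ + X]big1 ?addr0; last first.
  move=> j /norP [h1 h2]; rewrite /pa_loss ifF; last by lia.
  by rewrite ifF ?expr2 ?mulr0 //; lia.
apply: (@le_trans _ _ (\sum_(j < K.-1 | inI yl yr j)
   (al + 1 + ga) * (p + `|(th1 - th0) 0 j| ^+ 2 + `|xi j| ^+ 2 / ga))).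
  apply: ler_sum => j jI.
  have m1 : 1 <= m.
    rewrite /m (bigD1 j) //= lerDl; apply: sumr_ge0 => i _; exact: ler01.
  have ap : a ^+ 2 <= al * p.
    have mn : m != 0 by rewrite gt_eqF // (lt_le_trans ltr01 m1).
    rewrite /a normK2 /al /p.
    have -> : m * sqn x * (sqn (w1 - w0) / m) = sqn (w1 - w0) * sqn x by field.
    exact: cauchy.
  have PT := @per_term R a `|(th1 - th0) 0 j| `|xi j| al ga p (normr_ge0 _) (normr_ge0 _) (normr_ge0 _) al0 ga0 p0 ap.
  apply: le_trans PT.
  have [A1 A2] := F j.
  have Hl : 0 <= pa_loss w0 th0 x yl yr j <= a + `|(th1 - th0) 0 j| + `|xi j|.
    have n1 := ler_norm (dotv (w1 - w0) x).
    have n2 := ler_norm (- dotv (w1 - w0) x).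
    have n3 := ler_norm ((th1 - th0) 0 j).
    have n4 := ler_norm (- (th1 - th0) 0 j).
    have n5 := ler_norm (xi j).
    rewrite !normrN in n2 n4.
    move: n1 n2 n3 n4 n5; rewrite dotvB /a dotvB !mxE => n1 n2 n3 n4 n5.
    rewrite /pa_loss; case: ifP => c1.
      rewrite le_max lexx /= ge_max; apply/andP; split.
        by rewrite !addr_ge0 ?normr_ge0.
      have := A1 c1; lra.
    case: ifP => c2.
      rewrite le_max lexx /= ge_max; apply/andP; split.
        by rewrite !addr_ge0 ?normr_ge0.
      have := A2 c2; lra.
    by rewrite lexx /= !addr_ge0 ?normr_ge0.
  case/andP: Hl => l0 l1.
  rewrite -(@ler_pXn2r _ 2) // in l1; rewrite nnegrE //.
  by rewrite !addr_ge0 ?normr_ge0.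
rewrite -mulr_sumr !big_split /=.
have -> : \sum_(j < K.-1 | inI yl yr j) p = m * p.
  by rewrite /m mulr_suml; apply: eq_bigr => j _; rewrite mul1r.
have Cn : C != 0 by rewrite gt_eqF.
have -> : \sum_(j < K.-1 | inI yl yr j) (`|xi j| ^+ 2 / ga) =
          2 * C * \sum_(j < K.-1 | inI yl yr j) xi j ^+ 2.
  rewrite mulr_sumr; apply: eq_bigr => j _; rewrite normK2 /ga; by field.
have -> : al + 1 + ga = 1 + ga + sqn x * m by rewrite /al; ring.
apply: ler_wpM2l; first by have := sqn_ge0 _ _ x; nra.
rewrite lerD2r; apply: lerD.
  have [->|mn] := eqVneq m 0; first by rewrite mul0r sqn_ge0.
  by rewrite /p mulrC divfK.
have -> : \sum_(i < K.-1 | inI yl yr i) `|(th1 - th0) 0 i| ^+ 2 =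
          \sum_(i < K.-1 | inI yl yr i) ((th1 - th0) 0 i) ^+ 2.
  by apply: eq_bigr => j _; rewrite normK2.
rewrite sqnE [X in _ <= X](bigID (inI yl yr)) /= lerDl.
by apply: sumr_ge0 => i _; rewrite sqr_ge0.
Qed.

Lemma count_I (R : realFieldType) K yl yr : (1 <= yl)%N -> (yl <= yr)%N -> (yr <= K)%N ->
  \sum_(j < K.-1 | inI yl yr j) (1:R) <= (K.-1 - (yr - yl))%:R.
Proof.
move=> h1 h2 h3.
have -> : \sum_(j < K.-1 | inI yl yr j) (1:R) = (\sum_(j < K.-1 | inI yl yr j) 1%N)%:R.
  by rewrite natr_sum.
rewrite ler_nat /inI.
rewrite -(big_mkord (fun i => (i.+1 < yl) || (yr <= i.+1))%N (fun _ => 1%N)).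
rewrite (@big_cat_nat _ _ _ yl.-1) //=; last lia.
rewrite (@big_cat_nat _ _ _ yr.-1 yl.-1) //=; [|lia|lia].
have mid : (\sum_(yl.-1 <= i < yr.-1 | (i.+1 < yl) || (yr <= i.+1)) 1 = 0)%N.
  by rewrite big_nat_cond big1 // => i /andP [/andP [a b] c]; lia.
rewrite mid.
rewrite !sum1_count.
have c1 := count_size (fun i => (i.+1 < yl) || (yr <= i.+1))%N (index_iota 0 yl.-1).
have c2 := count_size (fun i => (i.+1 < yl) || (yr <= i.+1))%N (index_iota yr.-1 K.-1).
rewrite /index_iota !size_iota in c1 c2.
rewrite /index_iota in c1 c2 *.
lia.
Qed.
Arguments sqn_ge0 {R n}.
Arguments step_bound {R d K C x yl yr w0 w1 u th0 th1 b xs}.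
Arguments loss_bound {R d K C x yl yr} w0 {w1} th0 {th1 xi}.
Arguments count_I R {K yl yr}.

Lemma bigminn_le (I : eqType) (s : seq I) (F : I -> nat) k j :
  j \in s -> (\big[minn/k]_(i <- s) F i <= F j)%N.
Proof.
elim: s => [//|a s IH]; rewrite in_cons big_cons => /orP [/eqP ->|h].
  exact: geq_minl.
exact: leq_trans (geq_minr _ _) (IH h).
Qed.

Lemma loss_feasible {R : realFieldType} {d K} (x u : 'rV[R]_d) (b : 'rV[R]_K.-1) {yl yr} :
  (yl <= yr)%N -> pa2_feasible x yl yr u b (pa_loss u b x yl yr).
Proof.
move=> hy; rewrite /pa2_feasible => j; rewrite /pa_loss; split => h.
  rewrite h.
  have : 1 + b 0 j - dotv u x <= Num.max 0 (1 + b 0 j - dotv u x) by rewrite le_max lexx orbT.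
  lra.
rewrite ifF; last by lia.
rewrite h.
have : 1 + dotv u x - b 0 j <= Num.max 0 (1 + dotv u x - b 0 j) by rewrite le_max lexx orbT.
lra.
Qed.

Theorem theorem6 (R : realFieldType) (d K T : nat) (C : R)
    (x : nat -> 'rV[R]_d) (yl yr : nat -> nat)
    (w : nat -> 'rV[R]_d) (th : nat -> 'rV[R]_K.-1)
    (u : 'rV[R]_d) (b : 'rV[R]_K.-1) :
  (0 < T)%N -> 0 < C ->
  (forall t, (t < T)%N -> [/\ (1 <= yl t)%N, (yl t <= yr t)%N & (yr t <= K)%N]) ->
  w 0%N = 0 -> th 0%N = 0 ->
  (forall t, (t < T)%N ->
     pa2_step C (x t) (yl t) (yr t) (w t) (th t) (w t.+1) (th t.+1)) ->
  let c : nat := \big[minn/K]_(t < T) (yr t - yl t)%N in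
  let R2 : R := \big[Num.max/0]_(t < T) sqn (x t) in
  let D : R := 1 + 1 / (2 * C) + R2 * (K%:R - c%:R - 1) in
  \sum_(t < T) \sum_(j < K.-1) pa_loss (w t) (th t) (x t) (yl t) (yr t) j ^+ 2
  <= D * (sqn u + sqn b
          + 2 * C * \sum_(t < T) \sum_(j < K.-1)
                      pa_loss u b (x t) (yl t) (yr t) j ^+ 2).
Proof.
move=> T0 C0 Hy w0 th0 Hs; cbv zeta.
set c := \big[minn/K]_(t < T) _.
set R2 := \big[Num.max/0]_(t < T) _.
set D := 1 + 1 / (2 * C) + _.
pose Q t := sqn (u - w t) + sqn (b - th t).
pose L t := \sum_(j < K.-1) pa_loss (w t) (th t) (x t) (yl t) (yr t) j ^+ 2.
pose Ls t := \sum_(j < K.-1) pa_loss u b (x t) (yl t) (yr t) j ^+ 2.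
have R20 : 0 <= R2.
  apply: le_trans (sqn_ge0 (x 0%N)) _.
  exact: (le_bigmax _ (fun t : 'I_T => sqn (x t)) (Ordinal T0)).
have per : forall t : 'I_T, L t <= D * (Q t - Q t.+1 + 2 * C * Ls t).
  move=> [t ht] /=.
  have [y1 y2 y3] := Hy t ht.
  have [xi [Fxi Hb]] := step_bound C0 (Hs t ht) (loss_feasible (x t) u b y2).
  have Hl := loss_bound (w t) (th t) C0 y2 Fxi.
  set m := \sum_(j < K.-1 | inI (yl t) (yr t) j) (1:R) in Hl.
  set S := sqn (w t.+1 - w t) + sqn (th t.+1 - th t)
            + 2 * C * \sum_(j < K.-1 | inI (yl t) (yr t) j) xi j ^+ 2 in Hl Hb.
  have S0 : 0 <= S.
    rewrite /S !addr_ge0 ?sqn_ge0 //; apply: mulr_ge0.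
      by apply: mulr_ge0 => //; exact: ltW.
    by apply: sumr_ge0 => j _; exact: sqr_ge0.
  have m0 : 0 <= m by apply: sumr_ge0 => j _; exact: ler01.
  have cle : (c <= yr t - yl t)%N.
    by rewrite /c; exact: (bigminn_le _ _ (fun i : 'I_T => (yr i - yl i)%N) K _ (mem_index_enum (Ordinal ht))).
  have mle : m <= K%:R - c%:R - 1.
    apply: le_trans (count_I R y1 y2 y3) _.
    have e : (K.-1 - (yr t - yl t) + c + 1 <= K)%N by lia.
    move: e; rewrite -(ler_nat R) !natrD; lra.
  have xle : sqn (x t) <= R2.
    exact: (le_bigmax _ (fun t : 'I_T => sqn (x t)) (Ordinal ht)).
  have DD : 1 + 1 / (2 * C) + sqn (x t) * m <= D.
    rewrite /D lerD2l; apply: ler_pM => //; exact: sqn_ge0.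
  have Lsle : \sum_(j < K.-1 | inI (yl t) (yr t) j) pa_loss u b (x t) (yl t) (yr t) j ^+ 2 <= Ls t.
    rewrite /Ls [X in _ <= X](bigID (inI (yl t) (yr t))) /= lerDl.
    by apply: sumr_ge0 => i _; rewrite sqr_ge0.
  apply: le_trans Hl _.
  have D0 : 0 <= 1 + 1 / (2 * C) + sqn (x t) * m.
    have := sqn_ge0 (x t); have : 0 < 1 / (2 * C) by rewrite divr_gt0 // mulr_gt0.
    nra.
  apply: (@le_trans _ _ (D * S)); first by apply: ler_wpM2r.
  apply: ler_wpM2l; first exact: le_trans D0 DD.
  rewrite /Q; move: Hb Lsle; have := mulr_ge0 (ltW C0) (ltW C0); nra.
apply: le_trans (ler_sum _ (fun t _ => per t)) _.
rewrite -mulr_sumr; apply: ler_wpM2l.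
  have [y1 y2 y3] := Hy 0%N T0.
  have cle : (c <= yr 0%N - yl 0%N)%N.
    by rewrite /c; exact: (bigminn_le _ _ (fun i : 'I_T => (yr i - yl i)%N) K _ (mem_index_enum (Ordinal T0))).
  have e : (c + 1 <= K)%N by lia.
  move: e; rewrite -(ler_nat R) natrD mulr1n => e.
  have e2 : 0 <= K%:R - c%:R - 1 :> R by lra.
  have := mulr_ge0 R20 e2.
  have : 0 < 1 / (2 * C) by rewrite divr_gt0 // mulr_gt0.
  rewrite /D; lra.
rewrite big_split /= -mulr_sumr.
rewrite -(big_mkord xpredT (fun t => Q t - Q t.+1)).
have -> : \sum_(0 <= i < T) (Q i - Q i.+1) = Q 0%N - Q T.
  rewrite -[LHS]opprK -sumrN.
  under eq_bigr do rewrite opprB.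
  by rewrite telescope_sumr // opprB.
have QT : 0 <= Q T by rewrite /Q addr_ge0 ?sqn_ge0.
have -> : Q 0%N = sqn u + sqn b by rewrite /Q w0 th0 !subr0.
rewrite /Ls; lra.
Qed.
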